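(* Let $\mathcal{A}=(Q,A,\delta,q_0,F)$ be a semi-flower automaton. Then for every letter $b\in A$, $\mathcal{A}$ is a one-cluster automaton with respect to $b$; that is, the sub-digraph of the state digraph of $\mathcal{A}$ consisting of all states and all $b$-edges has exactly one $b$-cluster.
   Context: An automaton over a finite alphabet $A$ is a quintuple $\mathcal{A}=(Q,A,\delta,q_0,F)$ with $Q$ a non-empty finite set of states, initial state $q_0\in Q$, set of final states $F\subseteq Q$, and total transition function $\delta:Q\times A\to Q$. Its digraph $D(\mathcal{A})$ has vertex set $Q$ and, for each $p\in Q$, $a\in A$, an edge labeled $a$ (an $a$-edge) from $p$ to $\delta(p,a)$. A path is an alternating sequence $v_0,e_1,v_1,\dots,e_k,v_k$ of distinct vertices and edges with $e_i$ going from $v_{i-1}$ to $v_i$; a cycle is a path with at least one edge whose initial and terminal vertices coincide. A state $q$ is accessible if there is a path from $q_0$ to $q$, and co-accessible if there is a path from $q$ to a final state. $\mathcal{A}$ is a semi-flower automaton (SFA) if $F=\{q_0\}$, every state is accessible and co-accessible, and every cycle in $D(\mathcal{A})$ passes through $q_0$. For $b\in A$, let $\mathcal{R}$ be the sub-digraph of $D(\mathcal{A})$ formed by the $b$-edges; a $b$-cluster is a connected component of (the underlying graph of) $\mathcal{R}$. An automaton is a one-cluster automaton with respect to $b$ if it has exactly one $b$-cluster. *)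

(* Defs.v *)
From mathcomp Require Import all_boot.
Set Implicit Arguments. Unset Strict Implicit. Unset Printing Implicit Defensive.

(* The digraph D(A) has vertex set Q and, for each (p, a) : Q * A, an
   a-edge from p to delta p a; we identify that edge with the pair (p, a). *)

Section Automata.
Variables (Q A : finType) (delta : Q -> A -> Q).

Definition src (e : Q * A) : Q := e.1.
Definition tgt (e : Q * A) : Q := delta e.1 e.2.

Fixpoint walk_from (v : Q) (es : seq (Q * A)) : bool :=
  if es is e :: es' then (src e == v) && walk_from (tgt e) es' else true.

Definition walk_verts (v0 : Q) (es : seq (Q * A)) : seq Q := v0 :: map tgt es.

Definition is_path (u : Q) (es : seq (Q * A)) (w : Q) : bool :=
  [&& walk_from u es, uniq (walk_verts u es), uniq es & last u (map tgt es) == w].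

(* a cycle: a path with at least one edge whose initial and terminal vertices
   coincide (the only repeated vertex being v0 = vk) *)
Definition is_cycle (v0 : Q) (es : seq (Q * A)) : bool :=
  [&& walk_from v0 es, 0 < size es, last v0 (map tgt es) == v0,
      uniq (map tgt es) & uniq es].

Definition accessible (q0 q : Q) : Prop := exists es, is_path q0 es q.
Definition coaccessible (F : {set Q}) (q : Q) : Prop :=
  exists es f, f \in F /\ is_path q es f.

Definition semi_flower (q0 : Q) (F : {set Q}) : Prop :=
  [/\ F = [set q0],
      forall q, accessible q0 q,
      forall q, coaccessible F q &
      forall v0 es, is_cycle v0 es -> q0 \in walk_verts v0 es].

Definition b_adj (b : A) : rel Q := fun p q => (delta p b == q) || (delta q b == p).

Definition b_clusters (b : A) : {set {set Q}} :=
  [set [set y | connect (b_adj b) x y] | x : Q].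

Definition one_cluster (b : A) : Prop := #|b_clusters b| = 1.

End Automata.

(* Main.v *)
Require Import Defs.
From mathcomp Require Import all_boot zify.

Section Aux.
Variables (Q A : finType) (delta : Q -> A -> Q) (b : A).
Let f := fun x => delta x b.

Lemma connect_iter n y : connect (b_adj delta b) y (iter n f y).
Proof.
elim: n => [|n IH] /=; first exact: connect0.
apply: connect_trans IH _; apply: connect1; by rewrite /b_adj eqxx.
Qed.

Lemma walk_iter x k n :
  walk_from delta (iter k f x) (map (fun j => (iter j f x, b)) (iota k n)).
Proof.
elim: n k => [|n IH] k //=; rewrite /src eqxx /=; exact: IH (k.+1).
Qed.

Lemma last_iter x k n :
  last (iter k f x) (map (fun j => iter j.+1 f x) (iota k n)) = iter (k + n) f x.
Proof.
elim: n k => [|n IH] k /=; first by rewrite addn0.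
by rewrite -addSnnS; exact: IH (k.+1).
Qed.

Lemma reach_q0 q0 F : semi_flower delta q0 F -> forall q,
  connect (b_adj delta b) q q0.
Proof.
case=> _ _ _ Hcyc q.
have := looping_order f q => /trajectP [i lti Ei].
set x := iter i f q.
have Hq : connect (b_adj delta b) q x by exact: connect_iter.
apply: connect_trans Hq _.
pose P := fun p => (0 < p) && (iter p f x == x).
have exP : exists p, P p.
  exists (order f q - i); rewrite /P subn_gt0 lti /= /x -iterD subnK ?(ltnW lti) //.
  by rewrite -Ei.
case: (ex_minnP exP) => p /andP [p0 /eqP Hp] Hmin.
set g := fun k => iter k f x.
have Hneq : forall k1 k2, k1 < k2 <= p -> k2 - k1 < p -> g k1 != g k2.
  move=> k1 k2 /andP [lt12 le2p] ltd; apply/eqP => E.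
  have Pd : P (k2 - k1).
    rewrite /P subn_gt0 lt12 /=; apply/eqP.
    have E' : iter k2 f x = iter k1 f x := esym E.
    have e1 : k2 - k1 + p = p - k1 + k2 by lia.
    have e2 : p - k1 + k1 = p by lia.
    by rewrite -{1}Hp -iterD e1 iterD E' -iterD e2 Hp.
  by have := Hmin _ Pd; rewrite leqNgt ltd.
have inj : forall s, {in iota s p &, injective (fun k => g k)} -> True by [].
pose es := map (fun j => (g j, b)) (iota 0 p).
have Etgt : map (tgt delta) es = map (fun j => g j.+1) (iota 0 p)
  by rewrite /es -map_comp.
have cyc : is_cycle delta x es.
  rewrite /is_cycle /es (walk_iter x 0 p) size_map size_iota p0 /=.
  rewrite -/es Etgt (last_iter x 0 p) add0n Hp eqxx /=.
  apply/andP; split.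
    rewrite map_inj_in_uniq ?iota_uniq //.
    move=> k1 k2; rewrite !mem_iota !add0n /= => l1 l2 E.
    case: (ltngtP k1 k2) => // lt.
    + have := Hneq k1.+1 k2.+1; rewrite ltnS lt l2 => /(_ isT).
      have -> : k2.+1 - k1.+1 < p by lia.
      by move=> /(_ isT)/negP; case; apply/eqP; exact: E.
    + have := Hneq k2.+1 k1.+1; rewrite ltnS lt l1 => /(_ isT).
      have -> : k1.+1 - k2.+1 < p by lia.
      by move=> /(_ isT)/negP; case; apply/eqP; exact: (esym E).
  rewrite map_inj_in_uniq ?iota_uniq //.
  move=> k1 k2; rewrite !mem_iota !add0n /= => l1 l2 [E].
  case: (ltngtP k1 k2) => // lt.
  + have := Hneq k1 k2; rewrite lt (ltnW l2) => /(_ isT).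
    have -> : k2 - k1 < p by lia.
    by move=> /(_ isT)/negP; case; apply/eqP; exact: E.
  + have := Hneq k2 k1; rewrite lt (ltnW l1) => /(_ isT).
    have -> : k1 - k2 < p by lia.
    by move=> /(_ isT)/negP; case; apply/eqP; exact: (esym E).
have := Hcyc _ _ cyc; rewrite /walk_verts Etgt inE => /orP [/eqP -> | ].
  exact: connect0.
by case/mapP => j _ ->; apply: connect_iter.
Qed.

End Aux.

Theorem mainTheorem1 (Q A : finType) (delta : Q -> A -> Q) (q0 : Q) (F : {set Q}) :
  semi_flower delta q0 F -> forall b : A, one_cluster delta b.
Proof.
move=> H b; rewrite /one_cluster /b_clusters.
have sym : connect_sym (b_adj delta b).
  apply: sym_connect_sym => x y; by rewrite /b_adj orbC.
suff -> : [set [set y | connect (b_adj delta b) x y] | x : Q]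
          = [set [set y | connect (b_adj delta b) q0 y]] by rewrite cards1.
apply/setP => C; rewrite inE; apply/imsetP/eqP.
  case=> x _ ->; apply/setP => y; rewrite !inE.
  by rewrite (same_connect sym (@reach_q0 _ _ _ b _ _ H x)).
by move=> ->; exists q0.
Qed.
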